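(* Let $\mu$ be Lebesgue measure on $\mathbb{T}^2$, let $\alpha=n/m$ be rational ($n\in\mathbb{Z}$, $m\ge1$) and $\beta\in\mathbb{R}$. Then the measure-preserving system $(\mathbb{T}^2,\phi,\mu)$ is not weakly mixing. If moreover $\beta\in\mathbb{Z}+\alpha\mathbb{Z}$, then $(\mathbb{T}^2,\phi,\mu)$ is not ergodic.
   Context: $\mathbb{T}^2=[0,1)^2$ with addition modulo 1. Define $\theta(q)=1$ for $q\in[0,\tfrac12)$ and $\theta(q)=-1$ for $q\in[\tfrac12,1)$. The triangle map with parameters $(\alpha,\beta)$ is $\phi(q,p)=(q+p+\alpha\theta(q)+\beta,\ p+\alpha\theta(q)+\beta)\pmod 1$; it is a bijection preserving $\mu$. *)

(* Defs.v *)
From Stdlib Require Import Reals Lra ClassicalEpsilon.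
Open Scope R_scope.

Definition frac (x : R) : R := x - IZR (Int_part x).

Definition T2 (x : R * R) : Prop :=
  0 <= fst x < 1 /\ 0 <= snd x < 1.

Definition theta (q : R) : R := if Rlt_dec q (1/2) then 1 else -1.

Definition phi (alpha beta : R) (x : R * R) : R * R :=
  let q := fst x in let p := snd x in
  (frac (q + p + alpha * theta q + beta), frac (p + alpha * theta q + beta)).

Record rect := { ra1 : R; rb1 : R; ra2 : R; rb2 : R }.
Definition in_rect (r : rect) (x : R * R) : Prop :=
  ra1 r <= fst x <= rb1 r /\ ra2 r <= snd x <= rb2 r.
Definition area (r : rect) : R :=
  Rmax 0 (rb1 r - ra1 r) * Rmax 0 (rb2 r - ra2 r).

Definition cover_value (A : R * R -> Prop) (s : R) : Prop :=
  exists c : nat -> rect,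
    (forall x, A x -> exists k, in_rect (c k) x) /\
    Un_cv (fun N => sum_f_R0 (fun k => area (c k)) N) s.

Definition is_inf (P : R -> Prop) (m : R) : Prop :=
  (forall s, P s -> m <= s) /\ (forall m', (forall s, P s -> m' <= s) -> m' <= m).

(* Lebesgue (outer) measure of A (meaningful for A contained in T2) *)
Definition leb (A : R * R -> Prop) : R :=
  epsilon (inhabits 0) (fun m => is_inf (cover_value A) m).

Definition measurable (A : R * R -> Prop) : Prop :=
  (forall x, A x -> T2 x) /\
  forall E : R * R -> Prop, (forall x, E x -> T2 x) ->
    leb E = leb (fun x => E x /\ A x) + leb (fun x => E x /\ ~ A x).

Definition preim_iter (f : R * R -> R * R) (n : nat) (A : R * R -> Prop) :=
  fun x => T2 x /\ A (Nat.iter n f x).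

Definition ergodic (f : R * R -> R * R) : Prop :=
  forall A, measurable A ->
    (forall x, T2 x -> (A (f x) <-> A x)) ->
    leb A = 0 \/ leb A = 1.

Definition weak_mixing (f : R * R -> R * R) : Prop :=
  forall A B, measurable A -> measurable B ->
    Un_cv (fun N => / INR (S N) *
             sum_f_R0 (fun n => Rabs (leb (fun x => preim_iter f n A x /\ B x)
                                      - leb A * leb B)) N) 0.

(* Main.v *)
From Pilot Require Import Defs.
From Stdlib Require Import Reals ZArith Lra Lia ClassicalEpsilon FunctionalExtensionality PropExtensionality.
Import Pilot.Defs.
Open Scope R_scope.


Lemma Int_part_unique (k : Z) (r : R) : IZR k <= r < IZR k + 1 -> Int_part r = k.
Proof.
  intros [H1 H2]. destruct (base_Int_part r) as [B1 B2].
  assert (Hz : (k - Int_part r)%Z = 0%Z).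
  { apply one_IZR_lt1. rewrite minus_IZR. lra. }
  lia.
Qed.

Lemma frac_range (r : R) : 0 <= frac r < 1.
Proof. unfold frac. destruct (base_Int_part r). lra. Qed.

Lemma frac_addZ (r : R) (z : Z) : frac (r + IZR z) = frac r.
Proof.
  unfold frac. rewrite (Int_part_unique (Int_part r + z) (r + IZR z)).
  - rewrite plus_IZR. ring.
  - destruct (base_Int_part r). rewrite plus_IZR. lra.
Qed.

Lemma frac_frac_add (x y : R) : frac (frac x + y) = frac (x + y).
Proof.
  replace (frac x + y) with ((x + y) + IZR (- Int_part x)).
  - apply frac_addZ.
  - unfold frac. rewrite opp_IZR. ring.
Qed.

Lemma frac_id (r : R) : 0 <= r < 1 -> frac r = r.
Proof.
  intros H. unfold frac. rewrite (Int_part_unique 0 r). simpl; ring. simpl; lra.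
Qed.

Lemma frac_id1 (r : R) : 1 <= r < 2 -> frac r = r - 1.
Proof.
  intros H. unfold frac. rewrite (Int_part_unique 1 r). simpl; ring. simpl; lra.
Qed.

Lemma frac_mulnat (m : nat) (y : R) : frac (INR m * frac y) = frac (INR m * y).
Proof.
  replace (INR m * frac y) with (INR m * y + IZR (- (Z.of_nat m * Int_part y))).
  - apply frac_addZ.
  - unfold frac. rewrite opp_IZR, mult_IZR, <- INR_IZR_INZ. ring.
Qed.


Lemma phi_T2 a b x : T2 (phi a b x).
Proof. unfold T2, phi; simpl. split; apply frac_range. Qed.

Lemma iter_T2 f k x : (forall y, T2 (f y)) -> T2 x -> T2 (Nat.iter k f x).
Proof. intros Hf Hx. destruct k; simpl; auto. Qed.

Lemma theta_cases q : theta q = 1 \/ theta q = -1.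
Proof. unfold theta. destruct (Rlt_dec q (1/2)); auto. Qed.

Lemma snd_phi_mod (n : Z) (m : nat) (hm : (1 <= m)%nat) beta x :
  frac (INR m * snd (phi (IZR n / INR m) beta x)) = frac (INR m * snd x + INR m * beta).
Proof.
  unfold phi; simpl. rewrite frac_mulnat.
  assert (Hm : INR m <> 0) by (apply not_0_INR; lia).
  destruct (theta_cases (fst x)) as [H|H]; rewrite H.
  - replace (INR m * (snd x + IZR n / INR m * 1 + beta)) with
      (INR m * snd x + INR m * beta + IZR n) by (field; auto).
    apply frac_addZ.
  - replace (INR m * (snd x + IZR n / INR m * -1 + beta)) with
      (INR m * snd x + INR m * beta + IZR (- n)) by (rewrite opp_IZR; field; auto).
    apply frac_addZ.
Qed.

Lemma iter_mod (n : Z) (m : nat) (hm : (1 <= m)%nat) beta k x :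
  frac (INR m * snd (Nat.iter k (phi (IZR n / INR m) beta) x)) =
  frac (INR m * snd x + INR k * (INR m * beta)).
Proof.
  induction k.
  - simpl. f_equal. ring.
  - change (Nat.iter (S k) (phi (IZR n / INR m) beta) x) with
      (phi (IZR n / INR m) beta (Nat.iter k (phi (IZR n / INR m) beta) x)).
    rewrite snd_phi_mod by auto.
    rewrite <- frac_frac_add, IHk, frac_frac_add, S_INR. f_equal. ring.
Qed.


Lemma set_ext (A B : R * R -> Prop) : (forall x, A x <-> B x) -> A = B.
Proof. intros H. apply functional_extensionality; intros x. apply propositional_extensionality; auto. Qed.

Lemma cv_eventually (u : nat -> R) v : (exists N0, forall N, (N >= N0)%nat -> u N = v) -> Un_cv u v.
Proof.
  intros [N0 H] eps He. exists N0. intros N HN. rewrite H by auto. unfold R_dist.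
  rewrite Rminus_diag, Rabs_R0. lra.
Qed.

Lemma lim_le (u : nat -> R) l s : Un_cv u l -> (forall n, u n <= s) -> l <= s.
Proof.
  intros Hu Hs. apply (Rle_cv_lim (Un := u) (Vn := fun _ => s)); auto.
  apply cv_eventually. exists 0%nat. auto.
Qed.

Lemma lim_ge (u : nat -> R) l s : Un_cv u l -> (forall n, s <= u n) -> s <= l.
Proof.
  intros Hu Hs. apply (Rle_cv_lim (Un := fun _ => s) (Vn := u)); auto.
  apply cv_eventually. exists 0%nat. auto.
Qed.

Lemma area_nonneg r : 0 <= area r.
Proof. unfold area. apply Rmult_le_pos; apply Rmax_l. Qed.

Lemma psum_nonneg (f : nat -> R) N : (forall k, 0 <= f k) -> 0 <= sum_f_R0 f N.
Proof. intros H. induction N; simpl; auto. specialize (H (S N)). lra. Qed.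

Lemma cover_value_nonneg A s : cover_value A s -> 0 <= s.
Proof.
  intros [c [_ Hc]]. apply (lim_ge _ _ _ Hc). intros; apply psum_nonneg. intros; apply area_nonneg.
Qed.

Definition zrect : rect := {| ra1 := 0; rb1 := 0; ra2 := 0; rb2 := 0 |}.
Lemma area_zrect : area zrect = 0.
Proof. unfold area; simpl. rewrite Rminus_diag, Rmax_left by lra. ring. Qed.

Definition inT2 (A : R * R -> Prop) := forall x, A x -> T2 x.

Lemma cover_nonempty A : inT2 A -> exists s, cover_value A s.
Proof.
  intros HA. exists 1. exists (fun k => match k with 0%nat => {| ra1 := 0; rb1 := 1; ra2 := 0; rb2 := 1 |} | _ => zrect end).
  split.
  - intros x Hx. exists 0%nat. destruct (HA x Hx) as [[? ?] [? ?]]. unfold in_rect; simpl. lra.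
  - apply cv_eventually. exists 0%nat. intros N _. induction N.
    + simpl. unfold area; simpl. rewrite !Rmax_right by lra. ring.
    + simpl. simpl in IHN. rewrite IHN, area_zrect. ring.
Qed.

Lemma inf_exists A : inT2 A -> exists m, is_inf (cover_value A) m.
Proof.
  intros HA. set (E := fun y => exists s, cover_value A s /\ y = - s).
  assert (Hb : bound E).
  { exists 0. intros y [s [Hs ->]]. apply cover_value_nonneg in Hs. lra. }
  assert (Hne : exists y, E y).
  { destruct (cover_nonempty A HA) as [s Hs]. exists (-s). exists s; auto. }
  destruct (completeness E Hb Hne) as [l [Hl1 Hl2]].
  exists (- l). split.
  - intros s Hs. assert (E (-s)) by (exists s; auto). specialize (Hl1 _ H). lra.
  - intros m' Hm'. assert (l <= - m').
    { apply Hl2. intros y [s [Hs ->]]. specialize (Hm' s Hs). lra. }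
    lra.
Qed.

Lemma leb_spec A : inT2 A -> is_inf (cover_value A) (leb A).
Proof.
  intros HA. unfold leb. apply epsilon_spec. apply inf_exists; auto.
Qed.

Lemma leb_le_cover A s : inT2 A -> cover_value A s -> leb A <= s.
Proof. intros HA Hs. apply (proj1 (leb_spec A HA)); auto. Qed.

Lemma leb_ge A r : inT2 A -> (forall s, cover_value A s -> r <= s) -> r <= leb A.
Proof. intros HA H. apply (proj2 (leb_spec A HA)); auto. Qed.

Lemma leb_nonneg A : inT2 A -> 0 <= leb A.
Proof. intros HA. apply leb_ge; auto. apply cover_value_nonneg. Qed.

Lemma leb_approx A eps : inT2 A -> 0 < eps -> exists s, cover_value A s /\ s < leb A + eps.
Proof.
  intros HA He. apply NNPP. intros Hn.
  assert (leb A + eps <= leb A); [|lra].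
  apply leb_ge; auto. intros s Hs. apply Rnot_lt_le. intros Hlt. apply Hn. exists s; auto.
Qed.

Lemma cover_value_mono A B s : (forall x, A x -> B x) -> cover_value B s -> cover_value A s.
Proof. intros H [c [Hc1 Hc2]]. exists c. split; auto. Qed.

Lemma leb_mono A B : inT2 B -> (forall x, A x -> B x) -> leb A <= leb B.
Proof.
  intros HB H. assert (HA : inT2 A) by (intros x Hx; auto).
  apply leb_ge; auto. intros s Hs. apply leb_le_cover; auto. eapply cover_value_mono; [exact H|exact Hs].
Qed.


Definition interleave (cA cB : nat -> rect) (k : nat) : rect :=
  if Nat.even k then cA (Nat.div2 k) else cB (Nat.div2 k).

Lemma interleave_even cA cB N : interleave cA cB (2 * N) = cA N.
Proof. unfold interleave. rewrite Nat.even_even, Nat.div2_double. auto. Qed.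

Lemma interleave_odd cA cB N : interleave cA cB (S (2 * N)) = cB N.
Proof.
  unfold interleave. replace (S (2 * N)) with (2 * N + 1)%nat by lia.
  rewrite Nat.even_odd. replace (2 * N + 1)%nat with (S (2 * N)) by lia.
  rewrite Nat.div2_succ_double. auto.
Qed.

Lemma interleave_sum cA cB N :
  sum_f_R0 (fun k => area (interleave cA cB k)) (S (2 * N)) =
  sum_f_R0 (fun k => area (cA k)) N + sum_f_R0 (fun k => area (cB k)) N.
Proof.
  induction N.
  - simpl. change 0%nat with (2 * 0)%nat. rewrite interleave_even.
    change 1%nat with (S (2 * 0)). rewrite interleave_odd. simpl. ring.
  - replace (S (2 * S N)) with (S (S (S (2 * N)))) by lia.
    rewrite (tech5 _ (S (S (2 * N)))), (tech5 _ (S (2 * N))), IHN.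
    replace (S (S (2 * N))) with (2 * S N)%nat by lia. rewrite interleave_even.
    rewrite interleave_odd, !tech5. ring.
Qed.

Lemma interleave_sum2 cA cB N :
  sum_f_R0 (fun k => area (interleave cA cB k)) (2 * S N) =
  sum_f_R0 (fun k => area (cA k)) (S N) + sum_f_R0 (fun k => area (cB k)) N.
Proof.
  replace (2 * S N)%nat with (S (S (2 * N))) by lia.
  rewrite tech5, interleave_sum.
  replace (S (S (2 * N))) with (2 * S N)%nat by lia. rewrite interleave_even, tech5. ring.
Qed.

Lemma cover_union A B sA sB : cover_value A sA -> cover_value B sB ->
  cover_value (fun x => A x \/ B x) (sA + sB).
Proof.
  intros [cA [HA1 HA2]] [cB [HB1 HB2]]. exists (interleave cA cB). split.
  - intros x [Hx|Hx].
    + destruct (HA1 x Hx) as [k Hk]. exists (2 * k)%nat. rewrite interleave_even; auto.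
    + destruct (HB1 x Hx) as [k Hk]. exists (S (2 * k)). rewrite interleave_odd; auto.
  - intros eps He.
    destruct (HA2 (eps/2)) as [NA HNA]; [lra|].
    destruct (HB2 (eps/2)) as [NB HNB]; [lra|].
    exists (2 * S (NA + NB))%nat. intros n Hn.
    destruct (Nat.Even_or_Odd n) as [[M HM]|[M HM]].
    + destruct M as [|M]; [lia|]. subst n. rewrite interleave_sum2.
      specialize (HNA (S M) ltac:(lia)). specialize (HNB M ltac:(lia)).
      unfold R_dist in *.
      replace (sum_f_R0 (fun k => area (cA k)) (S M) + sum_f_R0 (fun k => area (cB k)) M - (sA + sB))
        with ((sum_f_R0 (fun k => area (cA k)) (S M) - sA) + (sum_f_R0 (fun k => area (cB k)) M - sB)) by ring.
      eapply Rle_lt_trans; [apply Rabs_triang|]. lra.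
    + subst n. replace (2 * M + 1)%nat with (S (2 * M)) by lia. rewrite interleave_sum.
      specialize (HNA M ltac:(lia)). specialize (HNB M ltac:(lia)).
      unfold R_dist in *.
      replace (sum_f_R0 (fun k => area (cA k)) M + sum_f_R0 (fun k => area (cB k)) M - (sA + sB))
        with ((sum_f_R0 (fun k => area (cA k)) M - sA) + (sum_f_R0 (fun k => area (cB k)) M - sB)) by ring.
      eapply Rle_lt_trans; [apply Rabs_triang|]. lra.
Qed.

Lemma leb_union A B : inT2 A -> inT2 B -> leb (fun x => A x \/ B x) <= leb A + leb B.
Proof.
  intros HA HB. assert (HU : inT2 (fun x => A x \/ B x)) by (intros x [H|H]; auto).
  apply Rnot_lt_le. intros Hlt.
  set (eps := (leb (fun x => A x \/ B x) - (leb A + leb B)) / 2).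
  assert (He : 0 < eps) by (unfold eps; lra).
  destruct (leb_approx A eps HA He) as [sA [HsA HsA']].
  destruct (leb_approx B eps HB He) as [sB [HsB HsB']].
  pose proof (leb_le_cover _ _ HU (cover_union _ _ _ _ HsA HsB)). unfold eps in *. lra.
Qed.


Lemma meas_compl A : measurable A -> measurable (fun x => T2 x /\ ~ A x).
Proof.
  intros [HA1 HA2]. split; [intros x [H _]; auto|].
  intros E HE. rewrite (HA2 E HE).
  rewrite (set_ext (fun x => E x /\ T2 x /\ ~ A x) (fun x => E x /\ ~ A x)).
  2:{ intros x; split; [tauto|]. intros [H1 H2]; auto. }
  rewrite (set_ext (fun x => E x /\ ~ (T2 x /\ ~ A x)) (fun x => E x /\ A x)).
  2:{ intros x; split.
      - intros [H1 H2]. split; auto. apply NNPP. intros Hn. apply H2. auto.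
      - intros [H1 H2]. split; auto. tauto. }
  ring.
Qed.

Lemma meas_inter A B : measurable A -> measurable B -> measurable (fun x => A x /\ B x).
Proof.
  intros [HA1 HA2] [HB1 HB2]. split; [intros x [H _]; auto|].
  intros E HE. rewrite (HA2 E HE).
  assert (HEA : inT2 (fun x => E x /\ A x)) by (intros x [H _]; auto).
  rewrite (HB2 _ HEA).
  assert (HE' : inT2 (fun x => E x /\ ~ (A x /\ B x))) by (intros x [H _]; auto).
  rewrite (HA2 _ HE').
  rewrite (set_ext (fun x => (E x /\ A x) /\ B x) (fun x => E x /\ A x /\ B x)) by (intros; tauto).
  rewrite (set_ext (fun x => (E x /\ ~ (A x /\ B x)) /\ A x) (fun x => (E x /\ A x) /\ ~ B x)) by (intros; tauto).
  rewrite (set_ext (fun x => (E x /\ ~ (A x /\ B x)) /\ ~ A x) (fun x => E x /\ ~ A x)) by (intros; tauto).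
  ring.
Qed.

Lemma meas_union A B : measurable A -> measurable B -> measurable (fun x => A x \/ B x).
Proof.
  intros HA HB.
  assert (H := meas_compl _ (meas_inter _ _ (meas_compl _ HA) (meas_compl _ HB))).
  rewrite (set_ext (fun x => A x \/ B x)
    (fun x => T2 x /\ ~ ((T2 x /\ ~ A x) /\ (T2 x /\ ~ B x)))); auto.
  destruct HA as [HA _]; destruct HB as [HB _].
  intros x; split.
  - intros [H1|H1]; split; eauto; tauto.
  - intros [H1 H2]. apply NNPP. intros Hn. apply H2. tauto.
Qed.

Lemma meas_ext A B : (forall x, A x <-> B x) -> measurable A -> measurable B.
Proof. intros H HA. rewrite <- (set_ext A B H). auto. Qed.

Lemma leb_ext A B : (forall x, A x <-> B x) -> leb A = leb B.
Proof. intros H. rewrite (set_ext A B H). auto. Qed.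


Definition HP (c : R) : R * R -> Prop := fun x => T2 x /\ snd x < c.

Definition lowr (c : R) (r : rect) : rect :=
  {| ra1 := ra1 r; rb1 := rb1 r; ra2 := ra2 r; rb2 := Rmin (rb2 r) c |}.
Definition upr (c : R) (r : rect) : rect :=
  {| ra1 := ra1 r; rb1 := rb1 r; ra2 := Rmax (ra2 r) c; rb2 := rb2 r |}.

Lemma split_len a b c : Rmax 0 (Rmin b c - a) + Rmax 0 (b - Rmax a c) <= Rmax 0 (b - a).
Proof.
  unfold Rmax, Rmin.
  repeat match goal with |- context [Rle_dec ?x ?y] => destruct (Rle_dec x y) end; lra.
Qed.

Lemma split_area c r : area (lowr c r) + area (upr c r) <= area r.
Proof.
  unfold area, lowr, upr; simpl.
  pose proof (split_len (ra2 r) (rb2 r) c). pose proof (Rmax_l 0 (rb1 r - ra1 r)).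
  rewrite <- Rmult_plus_distr_l. apply Rmult_le_compat_l; auto.
Qed.

Lemma psum_growing (f : nat -> R) : (forall k, 0 <= f k) -> Un_growing (fun N => sum_f_R0 f N).
Proof. intros H n. simpl. specialize (H (S n)). lra. Qed.

Lemma psum_cv_bounded (f g : nat -> R) s :
  (forall k, 0 <= f k) -> (forall k, f k <= g k) -> (forall k, 0 <= g k) ->
  Un_cv (fun N => sum_f_R0 g N) s -> exists s1, Un_cv (fun N => sum_f_R0 f N) s1.
Proof.
  intros Hf Hfg Hg Hc.
  destruct (growing_cv (fun N => sum_f_R0 f N)) as [l Hl].
  - apply psum_growing; auto.
  - exists s. intros y [i ->]. apply Rle_trans with (sum_f_R0 g i).
    + apply sum_Rle. intros; auto.
    + apply (growing_ineq (fun N => sum_f_R0 g N)); auto. apply psum_growing; auto.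
  - exists l; auto.
Qed.

Lemma HP_meas c : measurable (HP c).
Proof.
  split; [intros x [H _]; auto|]. intros E HE.
  assert (H1 : inT2 (fun x => E x /\ HP c x)) by (intros x [H _]; auto).
  assert (H2 : inT2 (fun x => E x /\ ~ HP c x)) by (intros x [H _]; auto).
  apply Rle_antisym.
  - rewrite (leb_ext E (fun x => (E x /\ HP c x) \/ (E x /\ ~ HP c x))) by (intros; tauto).
    apply leb_union; auto.
  - apply leb_ge; auto. intros s [cv [Hc1 Hc2]].
    destruct (psum_cv_bounded (fun k => area (lowr c (cv k))) (fun k => area (cv k)) s) as [s1 Hs1];
      auto using area_nonneg.
    { intros k. pose proof (split_area c (cv k)). pose proof (area_nonneg (upr c (cv k))). lra. }
    destruct (psum_cv_bounded (fun k => area (upr c (cv k))) (fun k => area (cv k)) s) as [s2 Hs2];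
      auto using area_nonneg.
    { intros k. pose proof (split_area c (cv k)). pose proof (area_nonneg (lowr c (cv k))). lra. }
    assert (L1 : leb (fun x => E x /\ HP c x) <= s1).
    { apply leb_le_cover; auto. exists (fun k => lowr c (cv k)). split; auto.
      intros x [Hx [_ Hp]]. destruct (Hc1 x Hx) as [k Hk]. exists k.
      unfold in_rect, lowr in *; simpl. unfold Rmin. destruct (Rle_dec (rb2 (cv k)) c); lra. }
    assert (L2 : leb (fun x => E x /\ ~ HP c x) <= s2).
    { apply leb_le_cover; auto. exists (fun k => upr c (cv k)). split; auto.
      intros x [Hx Hp]. destruct (Hc1 x Hx) as [k Hk]. exists k.
      assert (c <= snd x). { apply Rnot_lt_le. intros Hlt. apply Hp. split; auto. }
      unfold in_rect, upr in *; simpl. unfold Rmax. destruct (Rle_dec (ra2 (cv k)) c); lra. }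
    assert (s1 + s2 <= s).
    { apply (lim_le _ _ _ (CV_plus _ _ _ _ Hs1 Hs2)). intros N.
      rewrite <- sum_plus. apply Rle_trans with (sum_f_R0 (fun k => area (cv k)) N).
      - apply sum_Rle. intros; apply split_area.
      - apply (growing_ineq (fun N => sum_f_R0 (fun k => area (cv k)) N)); auto.
        apply psum_growing; auto using area_nonneg. }
    lra.
Qed.


Definition Str (m : nat) (a b : R) : R * R -> Prop :=
  fun x => T2 x /\ a <= frac (INR m * snd x) < b.

Definition SS (lo hi : R) : R * R -> Prop := fun x => HP hi x /\ (T2 x /\ ~ HP lo x).

Lemma SS_meas lo hi : measurable (SS lo hi).
Proof. apply meas_inter. apply HP_meas. apply meas_compl, HP_meas. Qed.

Definition UU (m : nat) (a b : R) (J : nat) : R * R -> Prop :=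
  fun x => exists j, (j < J)%nat /\ SS ((INR j + a) / INR m) ((INR j + b) / INR m) x.

Lemma UU_meas m a b J : measurable (UU m a b J).
Proof.
  induction J.
  - apply (meas_ext (HP 0)); [|apply HP_meas]. intros x; split.
    + intros [[_ [H _]] H']. lra.
    + intros [j [Hj _]]. lia.
  - apply (meas_ext (fun x => UU m a b J x \/ SS ((INR J + a) / INR m) ((INR J + b) / INR m) x)).
    + intros x; split.
      * intros [[j [Hj H]]|H]; [exists j; split; [lia|auto]|exists J; split; [lia|auto]].
      * intros [j [Hj H]]. destruct (Nat.eq_dec j J) as [->|Hne]; [right; auto|].
        left. exists j. split; [lia|auto].
    + apply meas_union; auto. apply SS_meas.
Qed.

Lemma Str_UU m a b (hm : (1 <= m)%nat) : 0 <= a -> b <= 1 ->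
  forall x, Str m a b x <-> UU m a b m x.
Proof.
  intros Ha Hb x. assert (Hm : 0 < INR m) by (apply lt_0_INR; lia).
  unfold Str, UU, SS, HP. split.
  - intros [HT Hf]. pose proof HT as [[? ?] [Hp0 Hp1]].
    set (y := INR m * snd x) in *.
    assert (Hy : 0 <= y < INR m) by (unfold y; split; nra).
    destruct (base_Int_part y) as [B1 B2].
    assert (Hj0 : (0 <= Int_part y)%Z).
    { apply le_IZR. simpl. apply Rnot_lt_le. intros Hlt.
      assert (IZR (Int_part y) <= -1). { apply IZR_le. apply lt_IZR in Hlt. lia. } lra. }
    exists (Z.to_nat (Int_part y)).
    assert (Hj : INR (Z.to_nat (Int_part y)) = IZR (Int_part y)).
    { rewrite INR_IZR_INZ, Z2Nat.id; auto. }
    unfold frac in Hf. split.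
    + apply INR_lt. rewrite Hj. lra.
    + rewrite Hj. split; [split; auto|split; auto].
      * apply (Rmult_lt_reg_l (INR m)); auto. field_simplify; [|lra]. unfold y in *; lra.
      * intros [_ Hlt]. apply (Rmult_lt_compat_l (INR m)) in Hlt; auto.
        field_simplify in Hlt; [|lra]. unfold y in *; lra.
  - intros [j [Hj [[HT Hhi] [_ Hlo]]]]. split; auto.
    assert (Hlo' : (INR j + a) / INR m <= snd x).
    { apply Rnot_lt_le. intros Hlt. apply Hlo. split; auto. }
    assert (E1 : INR j + a <= INR m * snd x).
    { apply (Rmult_le_compat_l (INR m)) in Hlo'; [|lra]. field_simplify in Hlo'; lra. }
    assert (E2 : INR m * snd x < INR j + b).
    { apply (Rmult_lt_compat_l (INR m)) in Hhi; auto. field_simplify in Hhi; lra. }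
    unfold frac. rewrite (Int_part_unique (Z.of_nat j)).
    + rewrite <- INR_IZR_INZ. lra.
    + rewrite <- INR_IZR_INZ. lra.
Qed.

Lemma Str_meas m a b (hm : (1 <= m)%nat) : 0 <= a -> b <= 1 -> measurable (Str m a b).
Proof.
  intros Ha Hb. apply (meas_ext (UU m a b m)); [|apply UU_meas].
  intros x. symmetry. apply Str_UU; auto.
Qed.

Lemma Str_inT2 m a b : inT2 (Str m a b).
Proof. intros x [H _]; auto. Qed.

Definition strect (m : nat) (a b : R) (k : nat) : rect :=
  if (k <? m)%nat then {| ra1 := 0; rb1 := 1; ra2 := (INR k + a) / INR m; rb2 := (INR k + b) / INR m |}
  else zrect.

Lemma Str_upper m a b (hm : (1 <= m)%nat) : 0 <= a <= b -> b <= 1 -> leb (Str m a b) <= b - a.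
Proof.
  intros Hab Hb. assert (Hm : 0 < INR m) by (apply lt_0_INR; lia).
  apply leb_le_cover; [apply Str_inT2|]. exists (strect m a b). split.
  - intros x Hx. apply (Str_UU m a b hm) in Hx; try lra.
    destruct Hx as [j [Hj [[[HT1 HT2] Hhi] [_ Hlo]]]]. exists j.
    unfold strect. apply Nat.ltb_lt in Hj. rewrite Hj. unfold in_rect; simpl.
    assert ((INR j + a) / INR m <= snd x).
    { apply Rnot_lt_le. intros Hlt. apply Hlo. split; auto. split; auto. }
    lra.
  - apply cv_eventually. exists m. intros N HN.
    assert (Hs : forall N, sum_f_R0 (fun k => area (strect m a b k)) N = INR (Nat.min (S N) m) * ((b - a) / INR m)).
    { assert (Ha : forall k, (k < m)%nat -> area (strect m a b k) = (b - a) / INR m).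
      { intros k Hk. unfold strect. apply Nat.ltb_lt in Hk. rewrite Hk. unfold area; simpl.
        rewrite (Rmax_right 0 (1 - 0)) by lra. rewrite Rmax_right.
        - field. lra.
        - replace ((INR k + b) / INR m - (INR k + a) / INR m) with ((b-a) * / INR m) by (field; lra).
          apply Rmult_le_pos; [lra| left; apply Rinv_0_lt_compat; auto]. }
      assert (Hz : forall k, (m <= k)%nat -> area (strect m a b k) = 0).
      { intros k Hk. unfold strect. destruct (Nat.ltb_spec k m); [lia|]. apply area_zrect. }
      induction N0.
      - simpl sum_f_R0. rewrite Ha by lia. replace (Nat.min 1 m) with 1%nat by lia. change (INR 1) with 1. ring.
      - rewrite tech5, IHN0. destruct (Nat.lt_ge_cases (S N0) m).
        + rewrite Ha by auto. replace (Nat.min (S (S N0)) m) with (S (Nat.min (S N0) m)) by lia.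
          rewrite S_INR. ring.
        + rewrite Hz by auto. replace (Nat.min (S (S N0)) m) with (Nat.min (S N0) m) by lia. ring. }
    rewrite Hs. replace (Nat.min (S N) m) with m by lia. field. lra.
Qed.

Lemma Str_exact m a b (hm : (1 <= m)%nat) (HT : 1 <= leb T2) :
  0 <= a <= b -> b <= 1 -> leb (Str m a b) = b - a.
Proof.
  intros Hab Hb. apply Rle_antisym; [apply Str_upper; auto|].
  destruct (Str_meas m a b hm) as [_ HS]; try lra.
  assert (HT2 : inT2 T2) by (intros x H; auto).
  specialize (HS T2 HT2).
  rewrite (leb_ext (fun x => T2 x /\ Str m a b x) (Str m a b)) in HS.
  2:{ intros x; split; [tauto|]. intros H; split; auto. apply H. }
  set (E' := fun x => T2 x /\ ~ Str m a b x) in HS.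
  destruct (Str_meas m 0 a hm) as [_ HS0]; try lra.
  assert (HE' : inT2 E') by (intros x [H _]; auto).
  specialize (HS0 E' HE').
  assert (L1 : leb (fun x => E' x /\ Str m 0 a x) <= a - 0).
  { apply Rle_trans with (leb (Str m 0 a)).
    - apply leb_mono; [apply Str_inT2|]. intros x [_ H]; auto.
    - apply Str_upper; auto; lra. }
  assert (L2 : leb (fun x => E' x /\ ~ Str m 0 a x) <= 1 - b).
  { apply Rle_trans with (leb (Str m b 1)).
    - apply leb_mono; [apply Str_inT2|]. intros x [[HT' H1] H2]. split; auto.
      pose proof (frac_range (INR m * snd x)).
      unfold Str in *. split; [|lra].
      apply Rnot_lt_le. intros Hlt. destruct (Rlt_dec (frac (INR m * snd x)) a).
      + apply H2. split; auto; lra.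
      + apply H1. split; auto; lra.
    - apply Str_upper; auto; lra. }
  lra.
Qed.


Definition inopen (r : rect) (z : R * R) : Prop :=
  ra1 r < fst z < rb1 r /\ ra2 r < snd z < rb2 r.

Record sqr := { sx : R; sy : R; ss : R }.
Definition insq (t : sqr) (z : R * R) : Prop :=
  sx t <= fst z <= sx t + ss t /\ sy t <= snd z <= sy t + ss t.

Definition Bad (U : nat -> rect) (t : sqr) : Prop :=
  forall N, exists z, insq t z /\ forall k, (k <= N)%nat -> ~ inopen (U k) z.

Definition qd (t : sqr) (i j : bool) : sqr :=
  {| sx := sx t + (if i then ss t / 2 else 0); sy := sy t + (if j then ss t / 2 else 0); ss := ss t / 2 |}.

Lemma quarter U t : 0 <= ss t -> Bad U t ->
  Bad U (qd t false false) \/ Bad U (qd t false true) \/ Bad U (qd t true false) \/ Bad U (qd t true true).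
Proof.
  intros Hs HB. apply NNPP. intros Hn.
  assert (G : forall i j, ~ Bad U (qd t i j) -> exists N, forall z, insq (qd t i j) z -> exists k, (k <= N)%nat /\ inopen (U k) z).
  { intros i j Hnb. apply NNPP. intros Hne. apply Hnb. intros N. apply NNPP. intros Hz. apply Hne.
    exists N. intros z Hzq. apply NNPP. intros Hk. apply Hz. exists z. split; auto.
    intros k Hk1 Hk2. apply Hk. exists k; auto. }
  destruct (G false false) as [N1 H1]; [tauto|].
  destruct (G false true) as [N2 H2]; [tauto|].
  destruct (G true false) as [N3 H3]; [tauto|].
  destruct (G true true) as [N4 H4]; [tauto|].
  destruct (HB (N1 + N2 + N3 + N4)%nat) as [z [Hz Hnc]].
  assert (Hq : exists i j, insq (qd t i j) z).
  { unfold insq in *; simpl.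
    destruct (Rle_dec (fst z) (sx t + ss t / 2)); destruct (Rle_dec (snd z) (sy t + ss t / 2)).
    - exists false, false; simpl; lra.
    - exists false, true; simpl; lra.
    - exists true, false; simpl; lra.
    - exists true, true; simpl; lra. }
  destruct Hq as [[|] [[|] Hq]].
  - destruct (H4 z Hq) as [k [Hk Hk']]. apply (Hnc k); auto; lia.
  - destruct (H3 z Hq) as [k [Hk Hk']]. apply (Hnc k); auto; lia.
  - destruct (H2 z Hq) as [k [Hk Hk']]. apply (Hnc k); auto; lia.
  - destruct (H1 z Hq) as [k [Hk Hk']]. apply (Hnc k); auto; lia.
Qed.

Definition step (U : nat -> rect) (t : sqr) : sqr :=
  if excluded_middle_informative (Bad U (qd t false false)) then qd t false false
  else if excluded_middle_informative (Bad U (qd t false true)) then qd t false true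
  else if excluded_middle_informative (Bad U (qd t true false)) then qd t true false
  else qd t true true.

Lemma step_spec U t : exists i j, step U t = qd t i j /\ (0 <= ss t -> Bad U t -> Bad U (qd t i j)).
Proof.
  unfold step.
  destruct (excluded_middle_informative (Bad U (qd t false false))).
  { exists false, false; auto. }
  destruct (excluded_middle_informative (Bad U (qd t false true))).
  { exists false, true; auto. }
  destruct (excluded_middle_informative (Bad U (qd t true false))).
  { exists true, false; auto. }
  exists true, true. split; auto. intros Hs HB. pose proof (quarter U t Hs HB). tauto.
Qed.

Definition sq_seq U t0 (j : nat) : sqr := Nat.iter j (step U) t0.

Lemma seq_props U t0 j : 0 <= ss t0 ->
  ss (sq_seq U t0 j) = ss t0 * (1/2) ^ j /\
  sx (sq_seq U t0 j) <= sx (sq_seq U t0 (S j)) /\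
  sx (sq_seq U t0 (S j)) + ss (sq_seq U t0 (S j)) <= sx (sq_seq U t0 j) + ss (sq_seq U t0 j) /\
  sy (sq_seq U t0 j) <= sy (sq_seq U t0 (S j)) /\
  sy (sq_seq U t0 (S j)) + ss (sq_seq U t0 (S j)) <= sy (sq_seq U t0 j) + ss (sq_seq U t0 j).
Proof.
  intros H0.
  assert (Hss : forall j, ss (sq_seq U t0 j) = ss t0 * (1/2) ^ j).
  { induction j0; simpl. ring. unfold sq_seq in *. simpl.
    destruct (step_spec U (Nat.iter j0 (step U) t0)) as [i [k [-> _]]]. simpl. rewrite IHj0. field. }
  split; auto.
  assert (Hp : 0 <= ss (sq_seq U t0 j)).
  { rewrite Hss. apply Rmult_le_pos; auto. left; apply pow_lt; lra. }
  unfold sq_seq in *. simpl. destruct (step_spec U (Nat.iter j (step U) t0)) as [i [k [-> _]]].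
  destruct i, k; simpl; lra.
Qed.

Lemma seq_bad U t0 j : 0 <= ss t0 -> Bad U t0 -> Bad U (sq_seq U t0 j).
Proof.
  intros H0 HB. induction j; simpl; auto.
  unfold sq_seq in *. simpl.
  destruct (step_spec U (Nat.iter j (step U) t0)) as [i [k [-> Hb]]]. apply Hb; auto.
  destruct (seq_props U t0 j H0) as [Hs _]. unfold sq_seq in Hs. rewrite Hs.
  apply Rmult_le_pos; auto. left; apply pow_lt; lra.
Qed.

Lemma seq_mono U t0 i j : 0 <= ss t0 -> (i <= j)%nat ->
  sx (sq_seq U t0 i) <= sx (sq_seq U t0 j) /\
  sx (sq_seq U t0 j) + ss (sq_seq U t0 j) <= sx (sq_seq U t0 i) + ss (sq_seq U t0 i) /\
  sy (sq_seq U t0 i) <= sy (sq_seq U t0 j) /\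
  sy (sq_seq U t0 j) + ss (sq_seq U t0 j) <= sy (sq_seq U t0 i) + ss (sq_seq U t0 i).
Proof.
  intros H0 Hij. induction Hij.
  - lra.
  - pose proof (seq_props U t0 m H0). lra.
Qed.

Lemma seq_ss_nonneg U t0 j : 0 <= ss t0 -> 0 <= ss (sq_seq U t0 j).
Proof.
  intros H0. destruct (seq_props U t0 j H0) as [-> _].
  apply Rmult_le_pos; auto. left; apply pow_lt; lra.
Qed.

Lemma lub_coord (u w : nat -> R) :
  (forall i j, (i <= j)%nat -> u i <= u j /\ u j + w j <= u i + w i) ->
  (forall j, 0 <= w j) ->
  exists l, forall j, u j <= l <= u j + w j.
Proof.
  intros Hm Hw. set (E := fun v => exists j, v = u j).
  assert (Hb : bound E).
  { exists (u 0%nat + w 0%nat). intros v [j ->]. destruct (Hm 0%nat j ltac:(lia)). specialize (Hw j). lra. }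
  destruct (completeness E Hb (ex_intro _ (u 0%nat) (ex_intro _ 0%nat eq_refl))) as [l [Hl1 Hl2]].
  exists l. intros j. split.
  - apply Hl1. exists j; auto.
  - apply Hl2. intros v [i ->]. destruct (Nat.le_ge_cases i j) as [H|H].
    + destruct (Hm i j H). specialize (Hw j). lra.
    + destruct (Hm j i H). specialize (Hw i). lra.
Qed.

Definition sq0 (L : R) (z : R * R) : Prop := 0 <= fst z <= L /\ 0 <= snd z <= L.

Lemma compact_sq (U : nat -> rect) L : 0 <= L ->
  (forall z, sq0 L z -> exists k, inopen (U k) z) ->
  exists N, forall z, sq0 L z -> exists k, (k <= N)%nat /\ inopen (U k) z.
Proof.
  intros HL Hcov. apply NNPP. intros Hn.
  set (t0 := {| sx := 0; sy := 0; ss := L |}).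
  assert (HB : Bad U t0).
  { intros N. apply NNPP. intros Hz. apply Hn. exists N. intros z Hzq. apply NNPP. intros Hk.
    apply Hz. exists z. split.
    - unfold insq, sq0 in *; simpl; lra.
    - intros k Hk1 Hk2. apply Hk. exists k; auto. }
  assert (H0 : 0 <= ss t0) by (simpl; auto).
  destruct (lub_coord (fun j => sx (sq_seq U t0 j)) (fun j => ss (sq_seq U t0 j))) as [lx Hlx].
  { intros i j Hij. pose proof (seq_mono U t0 i j H0 Hij). tauto. }
  { intros j. apply seq_ss_nonneg; auto. }
  destruct (lub_coord (fun j => sy (sq_seq U t0 j)) (fun j => ss (sq_seq U t0 j))) as [ly Hly].
  { intros i j Hij. pose proof (seq_mono U t0 i j H0 Hij). tauto. }
  { intros j. apply seq_ss_nonneg; auto. }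
  destruct (Hcov (lx, ly)) as [k Hk].
  { specialize (Hlx 0%nat); specialize (Hly 0%nat). unfold sq0; simpl in *. lra. }
  unfold inopen in Hk; simpl in Hk.
  set (d := Rmin (Rmin (lx - ra1 (U k)) (rb1 (U k) - lx)) (Rmin (ly - ra2 (U k)) (rb2 (U k) - ly))).
  assert (Hd : 0 < d).
  { unfold d. repeat apply Rmin_pos; lra. }
  assert (Hd1 : d <= lx - ra1 (U k) /\ d <= rb1 (U k) - lx /\ d <= ly - ra2 (U k) /\ d <= rb2 (U k) - ly).
  { unfold d.
    pose proof (Rmin_l (Rmin (lx - ra1 (U k)) (rb1 (U k) - lx)) (Rmin (ly - ra2 (U k)) (rb2 (U k) - ly))).
    pose proof (Rmin_r (Rmin (lx - ra1 (U k)) (rb1 (U k) - lx)) (Rmin (ly - ra2 (U k)) (rb2 (U k) - ly))).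
    pose proof (Rmin_l (lx - ra1 (U k)) (rb1 (U k) - lx)). pose proof (Rmin_r (lx - ra1 (U k)) (rb1 (U k) - lx)).
    pose proof (Rmin_l (ly - ra2 (U k)) (rb2 (U k) - ly)). pose proof (Rmin_r (ly - ra2 (U k)) (rb2 (U k) - ly)).
    repeat split; lra. }
  destruct (pow_lt_1_zero (1/2) ltac:(rewrite Rabs_right; lra) (d / (L + 1))) as [j Hj].
  { apply Rdiv_lt_0_compat; lra. }
  specialize (Hj j (le_n j)). rewrite Rabs_right in Hj by (left; apply pow_lt; lra).
  assert (Hsj : ss (sq_seq U t0 j) < d).
  { destruct (seq_props U t0 j H0) as [-> _]. simpl.
    apply Rle_lt_trans with ((L + 1) * (1/2)^j).
    - apply Rmult_le_compat_r; [left; apply pow_lt|]; lra.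
    - apply (Rmult_lt_compat_l (L + 1)) in Hj; [|lra]. field_simplify in Hj; lra. }
  destruct (seq_bad U t0 j H0 HB k) as [w [Hw Hnw]].
  apply (Hnw k (le_n k)). specialize (Hlx j); specialize (Hly j).
  unfold insq in Hw. unfold inopen. lra.
Qed.


Definition ind (P : Prop) : R := if excluded_middle_informative P then 1 else 0.

Lemma ind_nonneg P : 0 <= ind P.
Proof. unfold ind. destruct (excluded_middle_informative P); lra. Qed.

Lemma ind_and P Q : ind (P /\ Q) = ind P * ind Q.
Proof.
  unfold ind. destruct (excluded_middle_informative (P /\ Q)), (excluded_middle_informative P),
    (excluded_middle_informative Q); try ring; tauto.
Qed.

Lemma count1D a b h K : 0 < h ->
  h * sum_f_R0 (fun i => ind (a <= INR i * h <= b)) K <= Rmax 0 (Rmin b (INR K * h) - a + h).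
Proof.
  intros Hh. induction K.
  - simpl. unfold ind. destruct (excluded_middle_informative (a <= 0 * h <= b)).
    + rewrite Rmin_right by lra. rewrite Rmax_right by nra. nra.
    + rewrite Rmult_0_r. apply Rmax_l.
  - rewrite tech5, Rmult_plus_distr_l. unfold ind at 2.
    destruct (excluded_middle_informative (a <= INR (S K) * h <= b)) as [Hin|Hout].
    + rewrite S_INR in *. 
      assert (Hm : Rmin b (INR K * h) = INR K * h) by (apply Rmin_right; nra).
      assert (Hm2 : Rmin b ((INR K + 1) * h) = (INR K + 1) * h) by (apply Rmin_right; lra).
      rewrite Hm in IHK. rewrite Hm2. rewrite Rmax_right by nra.
      assert (Rmax 0 (INR K * h - a + h) <= (INR K + 1) * h - a).
      { apply Rmax_lub; nra. }
      lra.
    + rewrite Rmult_0_r, Rplus_0_r. eapply Rle_trans; [apply IHK|].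
      apply Rle_max_compat_l. rewrite S_INR.
      assert (Rmin b (INR K * h) <= Rmin b ((INR K + 1) * h)).
      { apply Rle_min_compat_l. nra. }
      lra.
Qed.

Lemma count1D' a b h K : 0 < h ->
  h * sum_f_R0 (fun i => ind (a <= INR i * h <= b)) K <= Rmax 0 (b - a) + h.
Proof.
  intros Hh. eapply Rle_trans; [apply count1D; auto|].
  apply Rmax_lub.
  - pose proof (Rmax_l 0 (b - a)). lra.
  - pose proof (Rmax_r 0 (b - a)). pose proof (Rmin_l b (INR K * h)). lra.
Qed.

Lemma sum_ge_term (f : nat -> R) N k : (forall i, 0 <= f i) -> (k <= N)%nat -> f k <= sum_f_R0 f N.
Proof.
  intros Hf Hk. induction N.
  - assert (k = 0%nat) by lia. subst. simpl. lra.
  - destruct (Nat.eq_dec k (S N)) as [->|Hne].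
    + rewrite tech5. pose proof (psum_nonneg f N Hf). lra.
    + rewrite tech5. specialize (IHN ltac:(lia)). specialize (Hf (S N)). lra.
Qed.

Lemma sum_swap (f : nat -> nat -> R) K N :
  sum_f_R0 (fun i => sum_f_R0 (fun k => f i k) N) K = sum_f_R0 (fun k => sum_f_R0 (fun i => f i k) K) N.
Proof.
  induction K.
  - simpl. auto.
  - rewrite tech5, IHK, <- sum_plus. apply sum_eq. intros i _. rewrite tech5. auto.
Qed.

Lemma sum_prod (f g : nat -> R) K M :
  sum_f_R0 (fun i => sum_f_R0 (fun j => f i * g j) M) K = sum_f_R0 f K * sum_f_R0 g M.
Proof.
  assert (Hs : forall c, sum_f_R0 (fun j => c * g j) M = c * sum_f_R0 g M).
  { intros c. rewrite scal_sum. apply sum_eq. intros; ring. }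
  induction K.
  - simpl. apply Hs.
  - rewrite !tech5, IHK, Hs. ring.
Qed.

Definition wid (r : rect) := Rmax 0 (rb1 r - ra1 r).
Definition hei (r : rect) := Rmax 0 (rb2 r - ra2 r).

Lemma count2D (V : nat -> rect) N L K : 0 < L -> (1 <= K)%nat ->
  (forall z, sq0 L z -> exists k, (k <= N)%nat /\ in_rect (V k) z) ->
  (L + L / INR K) ^ 2 <= sum_f_R0 (fun k => (wid (V k) + L / INR K) * (hei (V k) + L / INR K)) N.
Proof.
  intros HL HK Hcov. set (h := L / INR K).
  assert (HKp : 0 < INR K) by (apply lt_0_INR; lia).
  assert (Hh : 0 < h) by (unfold h; apply Rdiv_lt_0_compat; auto).
  set (SS3 := sum_f_R0 (fun i => sum_f_R0 (fun j => sum_f_R0 (fun k =>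
              ind (in_rect (V k) (INR i * h, INR j * h))) N) K) K).
  assert (S1 : (INR K + 1) ^ 2 <= SS3).
  { unfold SS3. replace ((INR K + 1) ^ 2) with
      (sum_f_R0 (fun i => sum_f_R0 (fun j => 1) K) K).
    2:{ rewrite sum_eq with (Bn := fun _ => INR (S K)) by (intros; rewrite sum_cte; ring).
        rewrite sum_cte, S_INR. ring. }
    apply sum_Rle. intros i Hi. apply sum_Rle. intros j Hj.
    destruct (Hcov (INR i * h, INR j * h)) as [k [Hk Hin]].
    { assert (INR i <= INR K) by (apply le_INR; auto). assert (INR j <= INR K) by (apply le_INR; auto).
      assert (INR K * h = L) by (unfold h; field; lra).
      pose proof (pos_INR i). pose proof (pos_INR j).
      unfold sq0; simpl; split; split; nra. }
    eapply Rle_trans; [|apply (sum_ge_term _ N k); auto; intros; apply ind_nonneg].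
    unfold ind. destruct (excluded_middle_informative _); [lra|tauto]. }
  assert (S2 : SS3 = sum_f_R0 (fun k =>
      sum_f_R0 (fun i => ind (ra1 (V k) <= INR i * h <= rb1 (V k))) K *
      sum_f_R0 (fun j => ind (ra2 (V k) <= INR j * h <= rb2 (V k))) K) N).
  { unfold SS3. rewrite sum_eq with (Bn := fun i => sum_f_R0 (fun k => sum_f_R0 (fun j =>
              ind (in_rect (V k) (INR i * h, INR j * h))) K) N).
    2:{ intros i _. apply sum_swap. }
    rewrite sum_swap. apply sum_eq. intros k _.
    rewrite <- sum_prod. apply sum_eq. intros i _. apply sum_eq. intros j _.
    unfold in_rect. simpl. rewrite ind_and. ring. }
  assert (S3 : h ^ 2 * SS3 <= sum_f_R0 (fun k => (wid (V k) + h) * (hei (V k) + h)) N).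
  { rewrite S2, scal_sum. apply sum_Rle. intros k _.
    pose proof (count1D' (ra1 (V k)) (rb1 (V k)) h K Hh).
    pose proof (count1D' (ra2 (V k)) (rb2 (V k)) h K Hh).
    pose proof (psum_nonneg (fun i => ind (ra1 (V k) <= INR i * h <= rb1 (V k))) K (fun _ => ind_nonneg _)).
    pose proof (psum_nonneg (fun i => ind (ra2 (V k) <= INR i * h <= rb2 (V k))) K (fun _ => ind_nonneg _)).
    unfold wid, hei.
    replace (sum_f_R0 (fun i => ind (ra1 (V k) <= INR i * h <= rb1 (V k))) K *
             sum_f_R0 (fun j => ind (ra2 (V k) <= INR j * h <= rb2 (V k))) K * h ^ 2)
      with ((h * sum_f_R0 (fun i => ind (ra1 (V k) <= INR i * h <= rb1 (V k))) K) *
            (h * sum_f_R0 (fun j => ind (ra2 (V k) <= INR j * h <= rb2 (V k))) K)) by ring.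
    apply Rmult_le_compat; auto; apply Rmult_le_pos; lra. }
  assert (E : (L + h) ^ 2 = h ^ 2 * (INR K + 1) ^ 2) by (unfold h; field; lra).
  rewrite E. eapply Rle_trans; [|exact S3]. apply Rmult_le_compat_l; auto.
  apply pow_le; lra.
Qed.


Definition enl (d : R) (r : rect) : rect :=
  {| ra1 := ra1 r - d; rb1 := rb1 r + d; ra2 := ra2 r - d; rb2 := rb2 r + d |}.

Lemma Rmax_shift x d : 0 <= d -> Rmax 0 (x + d) <= Rmax 0 x + d.
Proof. intros Hd. apply Rmax_lub; pose proof (Rmax_l 0 x); pose proof (Rmax_r 0 x); lra. Qed.

Lemma small_K x C : 0 <= C -> (forall K, (1 <= K)%nat -> x <= C / INR K) -> x <= 0.
Proof.
  intros HC H. apply Rnot_lt_le. intros Hx.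
  destruct (archimed (C / x)) as [Hu _].
  set (K := S (Z.to_nat (up (C / x)))).
  assert (HK : C / x < INR K).
  { unfold K. rewrite S_INR, INR_IZR_INZ.
    destruct (Z_le_gt_dec 0 (up (C / x))).
    - rewrite Z2Nat.id; auto. lra.
    - assert (C / x >= 0). { apply Rle_ge. unfold Rdiv. apply Rmult_le_pos; [lra|left; apply Rinv_0_lt_compat; lra]. }
      assert (IZR (up (C/x)) < 0) by (apply IZR_lt; lia). 
      pose proof (pos_INR (Z.to_nat (up (C / x)))). rewrite INR_IZR_INZ in H2. lra. }
  specialize (H K ltac:(unfold K; lia)).
  assert (HKp : 0 < INR K) by (apply lt_0_INR; unfold K; lia).
  apply (Rmult_lt_compat_l x) in HK; auto.
  replace (x * (C / x)) with C in HK by (field; lra).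
  apply (Rmult_le_compat_r (INR K)) in H; [|lra].
  replace (C / INR K * INR K) with C in H by (field; lra). lra.
Qed.

Lemma half_pow_le1 n : (1/2) ^ n <= 1.
Proof. induction n; simpl; [lra|]. pose proof (pow_lt (1/2) n ltac:(lra)). lra. Qed.

Lemma geom_sum eps N : sum_f_R0 (fun k => eps * (1/2) ^ (S k)) N = eps * (1 - (1/2) ^ (S N)).
Proof.
  induction N.
  - simpl. field.
  - rewrite tech5, IHN. simpl. field.
Qed.

Lemma cover_T2_ge s : cover_value T2 s -> 1 <= s.
Proof.
  intros [c [Hc1 Hc2]].
  assert (Hpart : forall N, sum_f_R0 (fun k => area (c k)) N <= s).
  { intros N. apply (growing_ineq (fun N => sum_f_R0 (fun k => area (c k)) N)); auto.
    apply psum_growing. intros; apply area_nonneg. }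
  assert (Main : forall eps, 0 < eps <= 1/2 -> (1 - eps) ^ 2 <= s + eps).
  { intros eps Heps. set (L := 1 - eps).
    set (dl := fun k => eps * (1/2) ^ (S k) / (2 * wid (c k) + 2 * hei (c k) + 8)).
    assert (Hdl : forall k, 0 < dl k <= 1 /\ dl k * (2 * wid (c k) + 2 * hei (c k) + 8) = eps * (1/2) ^ (S k)).
    { intros k. unfold dl. pose proof (Rmax_l 0 (rb1 (c k) - ra1 (c k))). pose proof (Rmax_l 0 (rb2 (c k) - ra2 (c k))).
      unfold wid, hei. assert (0 < (1/2) ^ (S k)) by (apply pow_lt; lra).
      assert ((1/2) ^ (S k) <= 1) by (apply half_pow_le1).
      split; [split|].
      - apply Rdiv_lt_0_compat; nra.
      - apply Rmult_le_reg_r with (2 * Rmax 0 (rb1 (c k) - ra1 (c k)) + 2 * Rmax 0 (rb2 (c k) - ra2 (c k)) + 8); [lra|].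
        field_simplify; nra.
      - field. lra. }
    set (e := fun k => enl (dl k) (c k)).
    destruct (compact_sq e L) as [N HN].
    { unfold L; lra. }
    { intros z Hz. destruct (Hc1 z) as [k Hk].
      { unfold sq0, T2, L in *. lra. }
      exists k. destruct (Hdl k) as [[? ?] _]. unfold inopen, e, enl, in_rect in *; simpl. lra. }
    set (C := sum_f_R0 (fun k => wid (c k) + hei (c k) + 1) N).
    assert (HC : 0 <= C).
    { apply psum_nonneg. intros k. unfold wid, hei.
      pose proof (Rmax_l 0 (rb1 (c k) - ra1 (c k))). pose proof (Rmax_l 0 (rb2 (c k) - ra2 (c k))). lra. }
    assert (HK : forall K, (1 <= K)%nat -> (1 - eps) ^ 2 - (s + eps) <= C / INR K).
    { intros K HK. assert (HKp : 1 <= INR K) by (apply (le_INR 1); auto).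
      set (h := L / INR K).
      assert (Hh : 0 < h <= 1).
      { unfold h, L. split. apply Rdiv_lt_0_compat; lra.
        apply Rmult_le_reg_r with (INR K); [lra|]. field_simplify; lra. }
      pose proof (count2D e N L K ltac:(unfold L; lra) HK) as Hc.
      assert (Hcov : forall z, sq0 L z -> exists k, (k <= N)%nat /\ in_rect (e k) z).
      { intros z Hz. destruct (HN z Hz) as [k [Hk Hin]]. exists k. split; auto.
        unfold inopen, in_rect in *. lra. }
      specialize (Hc Hcov). fold h in Hc.
      assert (Hterm : forall k, (wid (e k) + h) * (hei (e k) + h) <=
                               area (c k) + eps * (1/2) ^ (S k) + h * (wid (c k) + hei (c k) + 1)).
      { intros k. destruct (Hdl k) as [[Hd1 Hd2] Hd3].
        assert (Hw : wid (e k) <= wid (c k) + 2 * dl k).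
        { unfold wid, e, enl; simpl. replace (rb1 (c k) + dl k - (ra1 (c k) - dl k)) with
            (rb1 (c k) - ra1 (c k) + 2 * dl k) by ring. apply Rmax_shift; lra. }
        assert (Hh' : hei (e k) <= hei (c k) + 2 * dl k).
        { unfold hei, e, enl; simpl. replace (rb2 (c k) + dl k - (ra2 (c k) - dl k)) with
            (rb2 (c k) - ra2 (c k) + 2 * dl k) by ring. apply Rmax_shift; lra. }
        assert (Hw0 : 0 <= wid (e k)) by apply Rmax_l. assert (Hh0 : 0 <= hei (e k)) by apply Rmax_l.
        assert (Hwc : 0 <= wid (c k)) by apply Rmax_l. assert (Hhc : 0 <= hei (c k)) by apply Rmax_l.
        assert (Ha : area (c k) = wid (c k) * hei (c k)) by auto.
        rewrite Ha, <- Hd3.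
        apply Rle_trans with ((wid (c k) + 2 * dl k + h) * (hei (c k) + 2 * dl k + h)).
        - apply Rmult_le_compat; lra.
        - nra. }
      assert (Hsum : sum_f_R0 (fun k => (wid (e k) + h) * (hei (e k) + h)) N <= s + eps + h * C).
      { eapply Rle_trans; [apply sum_Rle; intros k _; apply Hterm|].
        rewrite !sum_plus, geom_sum. unfold C. rewrite scal_sum.
        rewrite (sum_eq (fun k => h * (wid (c k) + hei (c k) + 1)) (fun k => (wid (c k) + hei (c k) + 1) * h))
          by (intros; ring).
        specialize (Hpart N). assert (0 < (1/2) ^ (S N)) by (apply pow_lt; lra). nra. }
      assert (h * C <= C / INR K).
      { unfold h, L. replace ((1 - eps) / INR K * C) with ((1 - eps) * (C / INR K)) by (field; lra).
        assert (0 <= C / INR K) by (unfold Rdiv; apply Rmult_le_pos; [lra|left; apply Rinv_0_lt_compat; lra]).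
        nra. }
      assert (HL0 : 0 < L) by (unfold L; lra). assert (L ^ 2 <= (L + h) ^ 2) by (simpl; nra).
      unfold L in *. lra. }
    pose proof (small_K _ C HC HK). unfold L in *. lra. }
  apply Rnot_lt_le. intros Hlt.
  set (eps := Rmin (1/2) ((1 - s) / 4)).
  assert (He : 0 < eps <= 1/2).
  { unfold eps. split. apply Rmin_pos; lra. apply Rmin_l. }
  assert (He2 : eps <= (1 - s) / 4) by apply Rmin_r.
  specialize (Main eps He). nra.
Qed.

Lemma leb_T2 : 1 <= leb T2.
Proof. apply leb_ge. intros x H; auto. apply cover_T2_ge. Qed.


Definition fm (n : Z) (m : nat) (beta : R) := phi (IZR n / INR m) beta.

Lemma preim_str (n : Z) (m : nat) (hm : (1 <= m)%nat) (beta : R) k c d (lo hi : R) :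
  (forall u, 0 <= u < 1 ->
     ((0 <= frac (u + frac (INR k * (INR m * beta))) < 1/2 /\ c <= u < d) <-> lo <= u < hi)) ->
  leb (fun x => preim_iter (fm n m beta) k (Str m 0 (1/2)) x /\ Str m c d x) = leb (Str m lo hi).
Proof.
  intros H. apply leb_ext. intros x. unfold preim_iter, Str.
  assert (Hf : forall y, 0 <= frac y < 1) by apply frac_range.
  assert (E : frac (INR m * snd (Nat.iter k (fm n m beta) x)) =
              frac (frac (INR m * snd x) + frac (INR k * (INR m * beta)))).
  { unfold fm. rewrite iter_mod by auto. rewrite frac_frac_add, (Rplus_comm _ (frac _)), frac_frac_add. f_equal; ring. }
  rewrite E. specialize (H (frac (INR m * snd x)) (Hf _)).
  split.
  - intros [[HT [_ H1]] [_ H2]]. split; auto. apply H. auto.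
  - intros [HT H1]. apply H in H1. destruct H1. split; [split; auto; split; auto|split; auto].
    apply iter_T2; auto. intros; apply phi_T2.
Qed.

Lemma frac_sum_cases u t : 0 <= u < 1 -> 0 <= t < 1 ->
  (u + t < 1 /\ frac (u + t) = u + t) \/ (1 <= u + t /\ frac (u + t) = u + t - 1).
Proof.
  intros Hu Ht. destruct (Rlt_dec (u + t) 1).
  - left. split; auto. apply frac_id. lra.
  - right. split; [lra|]. apply frac_id1. lra.
Qed.

Definition T1 (n : Z) (m : nat) (beta : R) k := leb (fun x => preim_iter (fm n m beta) k (Str m 0 (1/2)) x /\ Str m 0 (1/2) x).
Definition T2' (n : Z) (m : nat) (beta : R) k := leb (fun x => preim_iter (fm n m beta) k (Str m 0 (1/2)) x /\ Str m (1/4) (3/4) x).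

Lemma pair_sum (n : Z) (m : nat) (hm : (1 <= m)%nat) (beta : R) k : Rabs (T1 n m beta k - 1/2 * (1/2)) + Rabs (T2' n m beta k - 1/2 * (1/2)) = 1/4.
Proof.
  set (t := frac (INR k * (INR m * beta))).
  assert (Ht : 0 <= t < 1) by apply frac_range.
  unfold T1, T2'. fold t.
  destruct (Rle_dec t (1/4)) as [C1|C1]; [|destruct (Rle_dec t (1/2)) as [C2|C2];
    [|destruct (Rle_dec t (3/4)) as [C3|C3]]].
  - rewrite (preim_str n m hm beta k 0 (1/2) 0 (1/2 - t)), (preim_str n m hm beta k (1/4) (3/4) (1/4) (1/2 - t)).
    + rewrite !Str_exact by (auto using leb_T2; lra).
      rewrite Rabs_right by lra. rewrite Rabs_left1 by lra. lra.
    + intros u Hu. fold t. destruct (frac_sum_cases u t Hu Ht) as [[? ->]|[? ->]]; lra.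
    + intros u Hu. fold t. destruct (frac_sum_cases u t Hu Ht) as [[? ->]|[? ->]]; lra.
  - rewrite (preim_str n m hm beta k 0 (1/2) 0 (1/2 - t)), (preim_str n m hm beta k (1/4) (3/4) (1 - t) (3/4)).
    + rewrite !Str_exact by (auto using leb_T2; lra).
      rewrite Rabs_left1 by lra. rewrite Rabs_left1 by lra. lra.
    + intros u Hu. fold t. destruct (frac_sum_cases u t Hu Ht) as [[? ->]|[? ->]]; lra.
    + intros u Hu. fold t. destruct (frac_sum_cases u t Hu Ht) as [[? ->]|[? ->]]; lra.
  - rewrite (preim_str n m hm beta k 0 (1/2) (1 - t) (1/2)), (preim_str n m hm beta k (1/4) (3/4) (1 - t) (3/4)).
    + rewrite !Str_exact by (auto using leb_T2; lra).
      rewrite Rabs_left1 by lra. rewrite Rabs_right by lra. lra.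
    + intros u Hu. fold t. destruct (frac_sum_cases u t Hu Ht) as [[? ->]|[? ->]]; lra.
    + intros u Hu. fold t. destruct (frac_sum_cases u t Hu Ht) as [[? ->]|[? ->]]; lra.
  - rewrite (preim_str n m hm beta k 0 (1/2) (1 - t) (1/2)), (preim_str n m hm beta k (1/4) (3/4) (1/4) (3/2 - t)).
    + rewrite !Str_exact by (auto using leb_T2; lra).
      rewrite Rabs_right by lra. rewrite Rabs_right by lra. lra.
    + intros u Hu. fold t. destruct (frac_sum_cases u t Hu Ht) as [[? ->]|[? ->]]; lra.
    + intros u Hu. fold t. destruct (frac_sum_cases u t Hu Ht) as [[? ->]|[? ->]]; lra.
Qed.

Lemma not_wm (n : Z) (m : nat) (hm : (1 <= m)%nat) (beta : R) : ~ weak_mixing (fm n m beta).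
Proof.
  intros Hwm.
  assert (HA : measurable (Str m 0 (1/2))) by (apply Str_meas; auto; lra).
  assert (HB : measurable (Str m (1/4) (3/4))) by (apply Str_meas; auto; lra).
  pose proof (Hwm _ _ HA HA) as H1. pose proof (Hwm _ _ HA HB) as H2.
  assert (LA : leb (Str m 0 (1/2)) = 1/2) by (rewrite Str_exact by (auto using leb_T2; lra); lra).
  assert (LB : leb (Str m (1/4) (3/4)) = 1/2) by (rewrite Str_exact by (auto using leb_T2; lra); lra).
  rewrite LA in H1, H2. rewrite LB in H2.
  pose proof (CV_plus _ _ _ _ H1 H2) as H3.
  assert (H4 : Un_cv (fun N => / INR (S N) * sum_f_R0 (fun k => Rabs (T1 n m beta k - 1/2 * (1/2))) N +
                              / INR (S N) * sum_f_R0 (fun k => Rabs (T2' n m beta k - 1/2 * (1/2))) N) (1/4)).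
  { apply cv_eventually. exists 0%nat. intros N _.
    rewrite <- Rmult_plus_distr_l, <- sum_plus.
    rewrite (sum_eq _ (fun _ => 1/4)) by (intros; apply pair_sum; auto).
    rewrite sum_cte. field. apply not_0_INR. lia. }
  unfold T1, T2' in H4. pose proof (UL_sequence _ _ _ H3 H4). lra.
Qed.

Lemma not_erg (n : Z) (m : nat) (hm : (1 <= m)%nat) (beta : R) : (exists k l : Z, beta = IZR k + (IZR n / INR m) * IZR l) -> ~ ergodic (fm n m beta).
Proof.
  intros [k [l Hb]] Herg.
  assert (HA : measurable (Str m 0 (1/2))) by (apply Str_meas; auto; lra).
  assert (Hm : INR m <> 0) by (apply not_0_INR; lia).
  assert (Hinv : forall x, T2 x -> (Str m 0 (1/2) (fm n m beta x) <-> Str m 0 (1/2) x)).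
  { intros x Hx. unfold Str. unfold fm. rewrite snd_phi_mod by auto.
    replace (INR m * beta) with (IZR (Z.of_nat m * k + n * l)).
    2:{ rewrite Hb, plus_IZR, !mult_IZR, <- INR_IZR_INZ. field. auto. }
    rewrite frac_addZ. split; intros [_ H]; split; auto. apply phi_T2. }
  destruct (Herg _ HA Hinv) as [H|H]; rewrite Str_exact in H by (auto using leb_T2; lra); lra.
Qed.



Theorem corollary1 (n : Z) (m : nat) (hm : (1 <= m)%nat) (beta : R) :
  ~ weak_mixing (phi (IZR n / INR m) beta) /\
  ((exists k l : Z, beta = IZR k + (IZR n / INR m) * IZR l) ->
   ~ ergodic (phi (IZR n / INR m) beta)).
Proof.
  split.
  - exact (not_wm n m hm beta).
  - exact (not_erg n m hm beta).
Qed.
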